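(* Let $N \geq 5$ be an odd integer and $\kappa$ a real number. Let $a>0$ and $b$ be real numbers such that the data set $(X_1,\dots,X_N)$ consisting of $X_1 = a$, of $\tfrac{N-1}{2}$ points equal to $b - \tfrac{a}{N-1}$, and of $\tfrac{N-1}{2}$ points equal to $-b - \tfrac{a}{N-1}$ satisfies $\mathbb{E}(X)=0$, $\mathbb{E}(X^2)=1$ and $\mathbb{E}(X^4)=\kappa$. Then $$\mathbb{E}(X^3) = \frac{-3}{N-1}\, a + \frac{N+1}{(N-1)^2}\, a^3 .$$ Furthermore, when $a = a(N,\kappa) = \sqrt{ \frac{N-1}{N+1} + \sqrt{ ( \frac{N-1}{N+1} )^2 - G(N,\kappa)}}$ with $G(N,\kappa) = \frac{N(N-1)^2 - (N-1)^3 \kappa}{(N+1)(N-3)}$ and $\kappa>1$ fixed, one has $\mathbb{E}(X^3) \sim -3 (\kappa - 1)^{1/4} N^{-3/4} + (\kappa - 1)^{3/4} N^{-1/4}$ as $N \to \infty$.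
   Context: For a finite data set $(X_1,\dots,X_N)$ and a function $f$, $\mathbb{E}(f(X))$ denotes the empirical mean $\frac1N\sum_{i=1}^N f(X_i)$. *)

(* Defs.v *)
From Stdlib Require Import Reals Lra List.
From Coquelicot Require Import Coquelicot.
Open Scope R_scope.

Definition emp_mean (f : R -> R) (xs : list R) : R :=
  fold_right Rplus 0 (map f xs) / INR (length xs).

Definition dataset (N : nat) (a b : R) : list R :=
  a :: repeat (b - a / (INR N - 1)) ((N - 1) / 2)
    ++ repeat (- b - a / (INR N - 1)) ((N - 1) / 2).

Definition G_fun (N : nat) (kappa : R) : R :=
  (INR N * (INR N - 1) ^ 2 - (INR N - 1) ^ 3 * kappa)
  / ((INR N + 1) * (INR N - 3)).

Definition a_fun (N : nat) (kappa : R) : R :=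
  sqrt ((INR N - 1) / (INR N + 1)
        + sqrt (((INR N - 1) / (INR N + 1)) ^ 2 - G_fun N kappa)).

Definition asym_fun (N : nat) (kappa : R) : R :=
  -3 * Rpower (kappa - 1) (1/4) * Rpower (INR N) (-3/4)
  + Rpower (kappa - 1) (3/4) * Rpower (INR N) (-1/4).

(* Main.v *)
Require Import Defs.
From Stdlib Require Import Reals Lra Lia List.
From Coquelicot Require Import Coquelicot.
Open Scope R_scope.

Lemma sum_app (f : R -> R) l1 l2 :
  fold_right Rplus 0 (map f (l1 ++ l2)) =
  fold_right Rplus 0 (map f l1) + fold_right Rplus 0 (map f l2).
Proof. induction l1 as [|x l IH]; simpl; [ring| rewrite IH; ring]. Qed.

Lemma sum_repeat (f : R -> R) x m :
  fold_right Rplus 0 (map f (repeat x m)) = INR m * f x.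
Proof. induction m as [|m IH]; simpl repeat; simpl map; simpl fold_right.
  simpl; ring. rewrite IH, S_INR; ring. Qed.

Lemma emp_dataset (f : R -> R) (m : nat) a b :
  emp_mean f (dataset (2*m+1) a b) =
  (f a + INR m * (f (b - a / (2 * INR m)) + f (- b - a / (2 * INR m)))) / (2 * INR m + 1).
Proof.
  unfold emp_mean, dataset.
  replace ((2*m+1-1)/2)%nat with m.
  2:{ replace (2*m+1-1)%nat with (m*2)%nat by lia. rewrite Nat.div_mul; lia. }
  replace (INR (2*m+1) - 1) with (2 * INR m).
  2:{ rewrite plus_INR, mult_INR; simpl; ring. }
  simpl map. simpl fold_right. rewrite sum_app, !sum_repeat.
  simpl length. rewrite length_app, !repeat_length.
  replace (INR (S (m+m))) with (2 * INR m + 1).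
  2:{ rewrite S_INR, plus_INR; ring. }
  f_equal; ring.
Qed.

Lemma part1 : forall (N : nat) (kappa a b : R),
      (5 <= N)%nat -> Nat.Odd N -> 0 < a ->
      emp_mean (fun x => x) (dataset N a b) = 0 ->
      emp_mean (fun x => x ^ 2) (dataset N a b) = 1 ->
      emp_mean (fun x => x ^ 4) (dataset N a b) = kappa ->
      emp_mean (fun x => x ^ 3) (dataset N a b)
        = -3 / (INR N - 1) * a + (INR N + 1) / (INR N - 1) ^ 2 * a ^ 3.
Proof.
  intros N kappa a b H5 [m Hm] Ha H1 H2 H4. subst N.
  assert (Hm2 : 2 <= INR m).
  { replace 2 with (INR 2) by (simpl; ring). apply le_INR; lia. }
  replace (INR (2*m+1)) with (2 * INR m + 1) by (rewrite plus_INR, mult_INR; simpl; ring).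
  rewrite emp_dataset in H2 |- *.
  set (c := a / (2 * INR m)) in *.
  assert (Hb : b^2 = (2 * INR m + 1 - a^2 - 2 * INR m * c^2) / (2 * INR m)).
  { assert (H2' : a ^ 2 + INR m * ((b - c) ^ 2 + (- b - c) ^ 2) = 1 * (2 * INR m + 1)).
    { rewrite <- H2 at 1. field. lra. }
    apply (Rmult_eq_reg_r (2 * INR m)); [|lra]. unfold Rdiv. rewrite Rmult_assoc, Rinv_l; [|lra].
    nra. }
  replace ((b - c)^3 + (-b - c)^3) with (-6 * b^2 * c - 2 * c^3) by ring.
  rewrite Hb. unfold c. field. lra.
Qed.

Definition Gq (kappa e : R) := ((1-e)^2 - (1-e)^3*kappa)/((1+e)*(1-3*e)).
Definition qf (e : R) := (1-e)/(1+e).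
Definition Xf (kappa e:R) := qf e ^2 * e - Gq kappa e.
Definition wf (kappa e : R) := sqrt (qf e * sqrt e + sqrt (Xf kappa e)).
Definition cc (kappa : R) := sqrt (sqrt (kappa - 1)).
Definition F (kappa e : R) := (wf kappa e ^3 * ((1+e)/(1-e)^2) - 3 * wf kappa e * (sqrt e/(1-e))) / (cc kappa^3 - 3*cc kappa*sqrt e).
Section S2. Variable kappa : R. Hypothesis Hk : 1 < kappa.
Local Notation Gq := (Gq kappa). Local Notation Xf := (Xf kappa). Local Notation wf := (wf kappa).
Local Notation cc := (cc kappa). Local Notation F := (F kappa).
Lemma Xf0 : Xf 0 = kappa - 1.
Proof. unfold Xf, qf, Gq. field. Qed.

Lemma cc_pos : 0 < cc.
Proof. unfold cc. apply sqrt_lt_R0, sqrt_lt_R0. lra. Qed.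

Lemma wf0 : wf 0 = cc.
Proof. unfold wf. rewrite Xf0, sqrt_0. unfold cc. f_equal. ring. Qed.

Lemma F0 : F 0 = 1.
Proof. unfold F. rewrite wf0, sqrt_0. pose proof cc_pos. field. lra. Qed.

Lemma cont_Xf : continuity_pt Xf 0.
Proof. unfold Xf, qf, Gq. reg; lra. Qed.

Lemma cont_sX : continuity_pt (fun e => sqrt (Xf e)) 0.
Proof. apply (continuity_pt_comp Xf sqrt). apply cont_Xf.
  apply continuity_pt_sqrt. rewrite Xf0; lra. Qed.

Lemma cont_s : continuity_pt sqrt 0.
Proof. apply continuity_pt_sqrt; lra. Qed.

Lemma cont_wf : continuity_pt wf 0.
Proof. unfold wf.
  apply (continuity_pt_comp (fun e => qf e * sqrt e + sqrt (Xf e)) sqrt).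
  - apply (continuity_pt_plus (fun e => qf e * sqrt e) (fun e => sqrt (Xf e))).
    + apply (continuity_pt_mult qf sqrt). unfold qf; reg; lra. apply cont_s.
    + apply cont_sX.
  - apply continuity_pt_sqrt. rewrite Xf0, sqrt_0. apply Rplus_le_le_0_compat.
    lra. apply sqrt_pos.
Qed.

Lemma cont_F : continuity_pt F 0.
Proof. unfold F.
  pose proof cont_wf as W. pose proof cont_s as S.
  apply (continuity_pt_div (fun e => wf e ^3 * ((1+e)/(1-e)^2) - 3 * wf e * (sqrt e/(1-e)))
     (fun e => cc^3 - 3*cc*sqrt e)).
  - apply (continuity_pt_minus (fun e => wf e ^3 * ((1+e)/(1-e)^2)) (fun e => 3 * wf e * (sqrt e/(1-e)))).
    + apply (continuity_pt_mult (fun e => wf e ^3) (fun e => ((1+e)/(1-e)^2))).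
      * apply (continuity_pt_comp wf (fun x => x^3)); auto. reg.
      * reg. lra.
    + apply (continuity_pt_mult (fun e => 3 * wf e) (fun e => sqrt e/(1-e))).
      * apply (continuity_pt_scal wf); auto.
      * apply (continuity_pt_div sqrt (fun e => 1 - e)); auto. reg. lra.
  - apply (continuity_pt_minus (fun e => cc^3) (fun e => 3*cc*sqrt e)).
    reg. apply (continuity_pt_scal sqrt); auto.
  - rewrite sqrt_0. pose proof cc_pos. replace (cc^3 - 3*cc*0) with (cc^3) by ring.
    apply pow_nonzero; lra.
Qed.

End S2.
Lemma Rp14 z : 0 < z -> Rpower z (1/4) = sqrt (sqrt z).
Proof. intro Hz. replace (1/4) with (/2 * /2) by field.
  rewrite <- Rpower_mult, (Rpower_sqrt z) by lra. apply Rpower_sqrt. apply sqrt_lt_R0; lra. Qed.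
Lemma Rp34 z : 0 < z -> Rpower z (3/4) = sqrt (sqrt z) ^ 3.
Proof. intro Hz. rewrite <- (Rp14 z Hz). rewrite <- Rpower_pow by (unfold Rpower; apply exp_pos).
  rewrite Rpower_mult. f_equal. simpl; field. Qed.
Lemma Rpm34 z : 0 < z -> Rpower z (-3/4) = / sqrt (sqrt z) ^ 3.
Proof. intro Hz. replace (-3/4) with (-(3/4)) by field. rewrite Rpower_Ropp, Rp34; auto. Qed.
Lemma Rpm14 z : 0 < z -> Rpower z (-1/4) = / sqrt (sqrt z).
Proof. intro Hz. replace (-1/4) with (-(1/4)) by field. rewrite Rpower_Ropp, Rp14; auto. Qed.

Lemma div_scale A B y : y <> 0 -> A / B = (A * y) / (B * y).
Proof. intro H. unfold Rdiv. rewrite Rinv_mult.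
  replace (A * y * (/ B * / y)) with (A * / B * (y * / y)) by ring.
  rewrite Rinv_r; auto; ring. Qed.

Lemma ident kappa N : 1 < kappa -> (5 <= N)%nat ->
  (-3 / (INR N - 1) * a_fun N kappa + (INR N + 1) / (INR N - 1) ^ 2 * a_fun N kappa ^ 3)
   / asym_fun N kappa = F kappa (/ INR N).
Proof.
  intros Hk HN.
  assert (Hn : 5 <= INR N) by (replace 5 with (INR 5) by (simpl; ring); apply le_INR; lia).
  unfold asym_fun. rewrite Rp14, Rp34, Rpm34, Rpm14 by lra.
  change (sqrt (sqrt (kappa - 1))) with (cc kappa).
  set (n := INR N) in *.
  assert (Hw : wf kappa (/ n) = a_fun N kappa / sqrt (sqrt n)).
  { unfold wf, a_fun. fold n.
    assert (Hq : qf (/ n) = (n - 1) / (n + 1)) by (unfold qf; field; lra).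
    assert (HX : Xf kappa (/ n) = (((n - 1) / (n + 1)) ^ 2 - G_fun N kappa) / n).
    { unfold Xf, Gq, G_fun. rewrite Hq. fold n. field. repeat split; lra. }
    rewrite Hq, HX, sqrt_inv, sqrt_div_alt by lra.
    rewrite <- (sqrt_div_alt _ (sqrt n)) by (apply sqrt_lt_R0; lra). f_equal. field.
    split; [lra|]. apply Rgt_not_eq, sqrt_lt_R0; lra. }
  unfold F. rewrite Hw, sqrt_inv.
  assert (Hs : 0 < sqrt n) by (apply sqrt_lt_R0; lra).
  assert (Hss : sqrt n * sqrt n = n) by (apply sqrt_sqrt; lra).
  set (y := sqrt (sqrt n)) in *.
  assert (Hy : y * y = sqrt n) by (apply sqrt_sqrt; lra).
  assert (Hy0 : 0 < y) by (apply sqrt_lt_R0; lra).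
  rewrite <- Hy. rewrite <- Hy in Hss.
  set (a := a_fun N kappa). set (c := cc kappa).
  clearbody a c y. rewrite <- Hss in Hn |- *. 
  rewrite (div_scale _ _ y) by lra. f_equal.
  all: field; repeat split; try lra; nra.
Qed.

Theorem proposition2 :
  (forall (N : nat) (kappa a b : R),
      (5 <= N)%nat -> Nat.Odd N -> 0 < a ->
      emp_mean (fun x => x) (dataset N a b) = 0 ->
      emp_mean (fun x => x ^ 2) (dataset N a b) = 1 ->
      emp_mean (fun x => x ^ 4) (dataset N a b) = kappa ->
      emp_mean (fun x => x ^ 3) (dataset N a b)
        = -3 / (INR N - 1) * a + (INR N + 1) / (INR N - 1) ^ 2 * a ^ 3)
  /\
  (forall (kappa : R) (b : nat -> R),
      1 < kappa ->
      (exists K : nat, forall N : nat, (K <= N)%nat -> Nat.Odd N ->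
         emp_mean (fun x => x) (dataset N (a_fun N kappa) (b N)) = 0 /\
         emp_mean (fun x => x ^ 2) (dataset N (a_fun N kappa) (b N)) = 1 /\
         emp_mean (fun x => x ^ 4) (dataset N (a_fun N kappa) (b N)) = kappa) ->
      is_lim_seq
        (fun k : nat =>
           emp_mean (fun x => x ^ 3)
             (dataset (2 * k + 1)%nat (a_fun (2 * k + 1)%nat kappa) (b (2 * k + 1)%nat))
           / asym_fun (2 * k + 1)%nat kappa)
        1).
Proof.
  split; [exact part1|].
  intros kappa b Hk [K HK].
  assert (Hinf : is_lim_seq (fun k => INR (2 * k + 1)) p_infty).
  { apply (is_lim_seq_le_p_loc INR). exists 0%nat. intros k _. apply le_INR; lia.
    exact is_lim_seq_INR. }
  assert (He : is_lim_seq (fun k => / INR (2 * k + 1)) 0).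
  { apply (is_lim_seq_inv _ p_infty) in Hinf; [exact Hinf|discriminate]. }
  pose proof (is_lim_seq_continuous (F kappa) _ 0 (cont_F kappa Hk) He) as HF.
  rewrite (F0 kappa Hk) in HF.
  apply (is_lim_seq_ext_loc (fun k => F kappa (/ INR (2 * k + 1)))); [|exact HF].
  exists (K + 5)%nat. intros k Hk'.
  assert (Hodd : Nat.Odd (2 * k + 1)) by (exists k; reflexivity).
  destruct (HK (2 * k + 1)%nat ltac:(lia) Hodd) as [H1 [H2 H4]].
  assert (Hn : 5 <= INR (2 * k + 1)) by (replace 5 with (INR 5) by (simpl; ring); apply le_INR; lia).
  rewrite (part1 (2 * k + 1)%nat kappa (a_fun (2 * k + 1)%nat kappa) (b (2 * k + 1)%nat)); auto.
  - symmetry. apply ident; auto; lia.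
  - lia.
  - unfold a_fun. apply sqrt_lt_R0. pose proof (sqrt_pos (((INR (2 * k + 1) - 1) / (INR (2 * k + 1) + 1)) ^ 2 - G_fun (2 * k + 1) kappa)).
    assert (0 < (INR (2 * k + 1) - 1) / (INR (2 * k + 1) + 1)) by (apply Rdiv_lt_0_compat; lra).
    lra.
Qed.
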